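(* Let $\lambda>0$, $p\in(0,1)$, let $B\ge1$ be an integer, $\alpha>2$, $d>0$, $\theta>0$, $R=\log(1+\theta)$, $\lambda_{max}=\frac{1}{d^2\theta^{2/\alpha}\kappa(\alpha)}$ with $\kappa(\alpha)=\frac{2\pi^2}{\alpha\sin(2\pi/\alpha)}$. Let $f_B:[0,1]\to\mathbb{R}$ be as defined in the context and $$C_B(q)=\lambda f_B(q)\exp\!\Big(-\frac{\lambda f_B(q)}{\lambda_{max}}\Big)R .$$ If there exists $\hat q\in[0,1]$ with $f_B(\hat q)=\frac{\lambda_{max}}{\lambda}$, then $q^\star=\hat q$ maximizes $C_B$ over $[0,1]$; otherwise $q^\star=1$ maximizes $C_B$ over $[0,1]$.
   Context: For $q\in(0,1]$ define $r_B(q)$ by: if $B=1$, $r_1(q)=\frac{p}{p+q-pq}$; if $B>1$ and $q\ne p$, $r_B(q)=\frac{\frac{p}{q}(1-\rho^B)}{1-\frac{p}{q}\rho^B}$ with $\rho=\frac{p(1-q)}{q(1-p)}$; if $B>1$ and $q=p$, $r_B(p)=\frac{B}{B+1-p}$. Set $f_B(q)=q\,r_B(q)$ for $q\in(0,1]$ and $f_B(0)=0$. Model: transmitters form a homogeneous Poisson point process of density $\lambda$ in $\mathbb{R}^2$, each with receiver at distance $d$, path-loss exponent $\alpha$, Rayleigh fading, success if SIR exceeds $\theta$; each transmitter harvests one energy unit per slot with probability $p$, stores it in a battery of capacity $B$, and when the battery is nonempty transmits with unit power with ALOHA probability $q$. Then $r_B(q)$ is the stationary probability that the battery is nonempty and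 $C_B(q)$ is the transmission capacity; the optimal ALOHA probability maximizes $C_B$. *)

(* Defs.v *)
From Stdlib Require Import Reals.
Open Scope R_scope.

Definition rho (p q : R) : R := (p * (1 - q)) / (q * (1 - p)).

(* r_B(q): stationary probability that the battery is nonempty, q in (0,1] *)
Definition r_B (B : nat) (p q : R) : R :=
  if Nat.eqb B 1 then p / (p + q - p * q)
  else if Req_EM_T q p then INR B / (INR B + 1 - p)
  else ((p / q) * (1 - rho p q ^ B)) / (1 - (p / q) * rho p q ^ B).

Definition f_B (B : nat) (p q : R) : R :=
  if Req_EM_T q 0 then 0 else q * r_B B p q.

Definition kappa (alpha : R) : R := 2 * PI ^ 2 / (alpha * sin (2 * PI / alpha)).

Definition lambda_max (alpha d theta : R) : R :=
  1 / (d ^ 2 * Rpower theta (2 / alpha) * kappa alpha).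

Definition C_B (lam p : R) (B : nat) (alpha d theta q : R) : R :=
  lam * f_B B p q * exp (- (lam * f_B B p q) / lambda_max alpha d theta)
      * ln (1 + theta).

(* Main.v *)
Require Import Defs.
From Stdlib Require Import Reals Lra Lia Psatz Ranalysis5.
Open Scope R_scope.

Fixpoint S (a b : R) (n : nat) : R :=
  match n with O => 0 | S n => b * S a b n + a ^ n end.

Lemma S_id a b n : b ^ n - a ^ n = (b - a) * S a b n.
Proof. induction n; simpl; [ring|]. transitivity (b*(b^n-a^n) + (b-a)*a^n); [ring|rewrite IHn; ring]. Qed.

Lemma S_ge0 a b n : 0 <= a -> 0 <= b -> 0 <= S a b n.
Proof. intros; induction n; simpl; [lra|]. pose proof (pow_le a n H). nra. Qed.

Lemma S_eq c n : S c c (Datatypes.S n) = INR (Datatypes.S n) * c ^ n.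
Proof. induction n. simpl; ring. change (S c c (Datatypes.S (Datatypes.S n))) with (c * S c c (Datatypes.S n) + c ^ (Datatypes.S n)).
rewrite IHn. rewrite !S_INR. simpl. ring. Qed.

Definition av p q := p * (1 - q).
Definition bv p q := q * (1 - p).
Definition F (B : nat) (p q : R) :=
  p * q * S (av p q) (bv p q) B / (q * S (av p q) (bv p q) B + av p q ^ B).

Lemma S_pos a b n : 0 <= a -> 0 < b -> 0 < S a b (Datatypes.S n).
Proof. intros; induction n; simpl; [lra|]. pose proof (pow_le a n H). simpl in IHn. nra. Qed.

Lemma D_pos B p q : (1 <= B)%nat -> 0 < p < 1 -> 0 <= q <= 1 ->
  0 < q * S (av p q) (bv p q) B + av p q ^ B.
Proof.
intros HB Hp Hq. destruct B as [|B]; [lia|].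
assert (0 <= av p q) by (unfold av; nra).
destruct (Req_dec q 0) as [->|Hq0].
- assert (0 < av p 0) by (unfold av; lra). pose proof (pow_lt _ (Datatypes.S B) H0). lra.
- assert (0 < bv p q) by (unfold bv; nra). pose proof (S_pos _ _ B H H0).
  pose proof (pow_le _ (Datatypes.S B) H). nra.
Qed.

Lemma fF B p q : (1 <= B)%nat -> 0 < p < 1 -> 0 <= q <= 1 -> f_B B p q = F B p q.
Proof.
intros HB Hp Hq. pose proof (D_pos B p q HB Hp Hq) as HD.
unfold f_B, F. destruct (Req_EM_T q 0) as [->|Hq0].
{ unfold Rdiv; ring. }
unfold r_B. destruct (Nat.eqb_spec B 1) as [->|HB1].
{ simpl in *. unfold av, bv in *. field. nra. }
destruct (Req_EM_T q p) as [->|Hqp].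
{ destruct B as [|B]; [lia|]. rewrite S_eq in HD |- *.
  change (bv p p) with (av p p) in *. rewrite <- tech_pow_Rmult in *.
  set (n := INR (Datatypes.S B)) in *. assert (0 < n) by (apply lt_0_INR; lia).
  set (c := av p p) in *. assert (0 < c) by (unfold c, av; nra).
  pose proof (pow_lt c B H0). assert (Hc : c = p * (1-p)) by reflexivity.
  set (cB := c ^ B) in *.
  field_simplify_eq. 2:{ split; [lra|]. intro. nra. }
  rewrite Hc. ring. }
assert (Hr : rho p q ^ B = av p q ^ B / bv p q ^ B).
{ unfold rho, Rdiv. rewrite Rpow_mult_distr, pow_inv. reflexivity. }
rewrite Hr.
assert (0 < bv p q) by (unfold bv; nra).
pose proof (pow_lt _ B H) as HY.
pose proof (S_id (av p q) (bv p q) B) as Hid.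
assert (Hba : bv p q - av p q = q - p) by (unfold av, bv; ring).
rewrite Hba in Hid.
set (X := av p q ^ B) in *. set (Y := bv p q ^ B) in *. set (Sv := S (av p q) (bv p q) B) in *.
assert (HY2 : Y = X + (q - p) * Sv) by lra.
assert (q * Y - p * X <> 0).
{ rewrite HY2. replace (q * (X + (q - p) * Sv) - p * X) with ((q-p)*(q*Sv+X)) by ring.
  apply Rmult_integral_contrapositive; split; lra. }
field_simplify_eq.
- rewrite HY2. ring.
- repeat split; try lra; exact H0.
Qed.

Lemma cont_lin (u v x : R) : continuity_pt (fun q => u + v * q) x.
Proof. reg. Qed.

Lemma cont_S p n x : continuity_pt (fun q => S (av p q) (bv p q) n) x.
Proof.
induction n; simpl.
- apply continuity_pt_const. intros a b; reflexivity.
- change (continuity_pt ((fun q => bv p q) * (fun q => S (av p q) (bv p q) n) + (fun q => (av p q ^ n)%R))%F x).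
  apply continuity_pt_plus; [apply continuity_pt_mult; [|exact IHn]|].
  + unfold bv. reg.
  + unfold av. reg.
Qed.

Lemma cont_F B p x : (1 <= B)%nat -> 0 < p < 1 -> 0 <= x <= 1 -> continuity_pt (F B p) x.
Proof.
intros HB Hp Hx. unfold F.
change (continuity_pt ((fun q => (p * q * S (av p q) (bv p q) B)%R) / (fun q => (q * S (av p q) (bv p q) B + av p q ^ B)%R))%F x).
apply continuity_pt_div.
- change (continuity_pt ((fun q => (p * q)%R) * (fun q => S (av p q) (bv p q) B))%F x).
  apply continuity_pt_mult; [reg | apply cont_S].
- change (continuity_pt ((fun q => q) * (fun q => S (av p q) (bv p q) B) + (fun q => (av p q ^ B)%R))%F x).
  apply continuity_pt_plus; [apply continuity_pt_mult; [reg | apply cont_S]|]. unfold av; reg.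
- pose proof (D_pos B p x HB Hp Hx). lra.
Qed.

Lemma F_le B p q : (1 <= B)%nat -> 0 < p < 1 -> 0 <= q <= 1 -> 0 <= F B p q <= p.
Proof.
intros HB Hp Hq. pose proof (D_pos B p q HB Hp Hq). unfold F in *.
assert (0 <= av p q) by (unfold av; nra). assert (0 <= bv p q) by (unfold bv; nra).
pose proof (S_ge0 _ _ B H0 H1). pose proof (pow_le _ B H0).
set (Sv := S (av p q) (bv p q) B) in *. set (X := av p q ^ B) in *.
split.
- unfold Rdiv. apply Rmult_le_pos; [apply Rmult_le_pos; [nra|lra]|]. left; apply Rinv_0_lt_compat; lra.
- apply Rmult_le_reg_r with (q*Sv+X); [lra|]. unfold Rdiv. rewrite Rmult_assoc, Rinv_l; nra.
Qed.

Lemma F_1 B p : (1 <= B)%nat -> 0 < p < 1 -> F B p 1 = p.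
Proof.
intros HB Hp. pose proof (D_pos B p 1 HB Hp ltac:(lra)). unfold F in *.
replace (av p 1) with 0 in * by (unfold av; ring).
destruct B as [|B]; [lia|]. rewrite pow_i in * by lia. field. lra.
Qed.

Lemma Lpos alpha d theta : 2 < alpha -> 0 < d -> 0 < theta -> 0 < lambda_max alpha d theta.
Proof.
intros Ha Hd Ht. unfold lambda_max, kappa.
assert (0 < sin (2 * PI / alpha)).
{ apply sin_gt_0. pose proof PI_RGT_0. apply Rdiv_lt_0_compat; lra.
  apply Rmult_lt_reg_r with alpha; [lra|]. unfold Rdiv. rewrite Rmult_assoc, Rinv_l by lra.
  pose proof PI_RGT_0. nra. }
assert (0 < Rpower theta (2/alpha)) by (unfold Rpower; apply exp_pos).
pose proof PI_RGT_0.
apply Rdiv_lt_0_compat; [lra|]. apply Rmult_lt_0_compat; [apply Rmult_lt_0_compat; [nra|lra]|].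
apply Rdiv_lt_0_compat; [nra|]. nra.
Qed.

Lemma g_max L x : 0 < L -> x * exp (- x / L) <= L * exp (- L / L).
Proof.
intros HL. set (t := x / L). assert (x = L * t) by (unfold t; field; lra).
replace (- x / L) with (- t) by (unfold t, Rdiv; ring).
replace (- L / L) with (-1) by (field; lra).
pose proof (exp_ineq1_le (t - 1)).
assert (t <= exp (t-1)) by lra.
rewrite H. rewrite Rmult_assoc. apply Rmult_le_compat_l; [lra|].
replace (exp (-1)) with (exp (t-1) * exp (-t)) by (rewrite <- exp_plus; f_equal; ring).
pose proof (exp_pos (-t)). nra.
Qed.

Lemma g_mono L x y : 0 < L -> 0 <= x <= y -> y <= L -> x * exp (- x / L) <= y * exp (- y / L).
Proof.
intros HL Hx Hy. set (t := (y - x) / L). assert (0 <= t) by (unfold t; unfold Rdiv; apply Rmult_le_pos; [lra|left; apply Rinv_0_lt_compat; lra]).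
assert (x = y - L * t) by (unfold t; field; lra).
replace (- x / L) with (- y / L + t) by (rewrite H0; field; lra).
rewrite exp_plus. pose proof (exp_pos (- y / L)). pose proof (exp_pos t).
pose proof (exp_ineq1_le (-t)).
assert (Hk : x * exp t <= y).
{ assert (exp t * exp (-t) = 1) by (rewrite <- exp_plus; replace (t + - t) with 0 by ring; apply exp_0).
  assert (y * (1 - exp (-t)) <= L * t).
  { assert (0 <= 1 - exp (-t)). { assert (exp (-t) <= 1). { rewrite <- exp_0. destruct H. apply Rlt_le, exp_increasing; lra. rewrite <- H; right; f_equal; ring. } lra. }
    nra. }
  rewrite H0. nra. }
replace (x * (exp (- y / L) * exp t)) with ((x * exp t) * exp (- y / L)) by ring.
apply Rmult_le_compat_r; lra.
Qed.

Theorem theorem2 (lam p : R) (B : nat) (alpha d theta : R)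
  (Hlam : 0 < lam) (Hp0 : 0 < p) (Hp1 : p < 1) (HB : (1 <= B)%nat)
  (Halpha : 2 < alpha) (Hd : 0 < d) (Htheta : 0 < theta) :
  (forall qh : R, 0 <= qh <= 1 ->
     f_B B p qh = lambda_max alpha d theta / lam ->
     forall q : R, 0 <= q <= 1 ->
       C_B lam p B alpha d theta q <= C_B lam p B alpha d theta qh) /\
  ((~ exists qh : R, 0 <= qh <= 1 /\ f_B B p qh = lambda_max alpha d theta / lam) ->
     forall q : R, 0 <= q <= 1 ->
       C_B lam p B alpha d theta q <= C_B lam p B alpha d theta 1).
Proof.
pose proof (Lpos alpha d theta Halpha Hd Htheta) as HL.
set (L := lambda_max alpha d theta) in *.
assert (Hln : 0 < ln (1 + theta)) by (rewrite <- ln_1; apply ln_increasing; lra).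
assert (Hp : 0 < p < 1) by lra.
unfold C_B; fold L. split.
- intros qh Hqh Hf q Hq. rewrite Hf. replace (lam * (L / lam)) with L by (field; lra).
  apply Rmult_le_compat_r; [lra|]. apply g_max; exact HL.
- intros Hne q Hq.
  assert (Hf1 : f_B B p 1 = p) by (rewrite fF by (auto; lra); apply F_1; auto).
  assert (HpM : p < L / lam).
  { destruct (Rlt_le_dec p (L / lam)) as [h|h]; [exact h|]. exfalso. destruct h as [h|h].
    - destruct (IVT_interv (fun q => F B p q - L / lam) 0 1) as [z [Hz Hfz]].
      + intros a Ha. apply continuity_pt_minus; [apply cont_F; auto | apply continuity_pt_const; intros u v; reflexivity].
      + lra.
      + assert (F B p 0 = 0) by (unfold F; unfold Rdiv; ring).
        rewrite H. assert (0 < L / lam) by (apply Rdiv_lt_0_compat; lra). lra.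
      + rewrite F_1 by auto. lra.
      + apply Hne. exists z. split; [exact Hz|]. rewrite fF by auto. lra.
    - apply Hne. exists 1. split; [lra|]. rewrite Hf1. lra. }
  apply Rmult_le_compat_r; [lra|]. rewrite Hf1.
  rewrite fF by auto. pose proof (F_le B p q HB Hp Hq).
  apply g_mono; [exact HL| split; nra |].
  apply Rmult_lt_compat_l with (r := lam) in HpM; [|lra].
  replace (lam * (L / lam)) with L in HpM by (field; lra). lra.
Qed.
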